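(* Let $f:\mathbb{N}^d\to\mathbb{N}$. If there exists an increasing (in the componentwise order) sequence $(\vec{a}_1,\vec{a}_2,\ldots)$ of elements of $\mathbb{N}^d$ such that for all $i<j$ there exists some $\vec{\Delta}_{ij}\in\mathbb{N}^d$ with $f(\vec{a}_i+\vec{\Delta}_{ij})-f(\vec{a}_i)>f(\vec{a}_j+\vec{\Delta}_{ij})-f(\vec{a}_j)$, then $f$ is not obliviously-computable.
   Context: A chemical reaction network (CRN) is a pair $(\mathcal{S},\mathcal{R})$ of a finite set of species and a finite set of reactions $(\vec{R},\vec{P})\in\mathbb{N}^{\mathcal{S}}\times\mathbb{N}^{\mathcal{S}}$. A configuration is $\vec{C}\in\mathbb{N}^{\mathcal{S}}$; a reaction is applicable if $\vec{R}\le\vec{C}$ and yields $\vec{C}-\vec{R}+\vec{P}$; reachability is via finite sequences of applicable reactions. To compute $f:\mathbb{N}^d\to\mathbb{N}$ the CRN has input species $X_1,\ldots,X_d$, output species $Y$, leader species $L$; the initial configuration $\vec{I}_{\vec{x}}$ has $\vec{x}(i)$ copies of $X_i$, one $L$, nothing else. $\vec{C}$ is stable if all configurations reachable from it have the same count of $Y$. The CRN stably computes $f$ if for every $\vec{x}$ and every $\vec{C}$ reachable from $\vec{I}_{\vec{x}}$ some stable $\vec{O}$ reachable from $\vec{C}$ has $\vec{O}(Y)=f(\vec{x})$. The CRN is output-oblivious if $Y$ is never a reactant. $f$ is obliviously-computable if stably computed by an output-oblivious CRN. *)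

(* Defs.v *)
From Stdlib Require List.
From mathcomp Require Import all_boot all_algebra.
Set Implicit Arguments. Unset Strict Implicit. Unset Printing Implicit Defensive.

Definition config (S : finType) := S -> nat.

(* A reaction is a pair (reactants, products). *)
Definition reaction (S : finType) := (config S * config S)%type.

Record CRN (d : nat) (S : finType) := MkCRN {
  reactions : seq (reaction S);
  inp : 'I_d -> S;
  out : S;
  leader : S
}.

Definition cle (S : finType) (C D : config S) : Prop := forall s, C s <= D s.

Definition step d (S : finType) (N : CRN d S) (C D : config S) : Prop :=
  exists2 r, List.In r (reactions N) &
    cle r.1 C /\ D = (fun s => C s - r.1 s + r.2 s).

Inductive reachable d (S : finType) (N : CRN d S) : config S -> config S -> Prop :=
| reach_refl C : reachable N C C
| reach_step C D E : step N C D -> reachable N D E -> reachable N C E.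

Definition init d (S : finType) (N : CRN d S) (x : 'I_d -> nat) : config S :=
  fun s => (\sum_(i < d | inp N i == s) x i + (s == leader N))%N.

Definition io_distinct d (S : finType) (N : CRN d S) : Prop :=
  injective (inp N) /\ (forall i, inp N i <> out N) /\
  (forall i, inp N i <> leader N) /\ out N <> leader N.

Definition stable d (S : finType) (N : CRN d S) (C : config S) : Prop :=
  forall D1 D2, reachable N C D1 -> reachable N C D2 -> D1 (out N) = D2 (out N).

Definition stably_computes d (S : finType) (N : CRN d S) (f : ('I_d -> nat) -> nat)
  : Prop :=
  forall x C, reachable N (init N x) C ->
    exists O, [/\ reachable N C O, stable N O & O (out N) = f x].

Definition output_oblivious d (S : finType) (N : CRN d S) : Prop :=
  forall r, List.In r (reactions N) -> r.1 (out N) = 0%N.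

Definition obliviously_computable d (f : ('I_d -> nat) -> nat) : Prop :=
  exists (S : finType) (N : CRN d S),
    [/\ io_distinct N, output_oblivious N & stably_computes N f].

Definition vle d (a b : 'I_d -> nat) : Prop := forall i, a i <= b i.
Definition vadd d (a b : 'I_d -> nat) : 'I_d -> nat := fun i => (a i + b i)%N.

(* Main.v *)
Require Import Defs.
From mathcomp Require Import all_boot all_algebra.
From mathcomp Require Import zify.
From Stdlib Require Import Classical ClassicalEpsilon FunctionalExtensionality.
Import GRing.Theory Num.Theory.

Lemma tail_min_aux (h : nat -> nat) (b : nat) : forall m,
  (exists n, m < n /\ h n <= b) ->
  exists n, m < n /\ forall k, m < k -> h n <= h k.
Proof.
elim: b => [|b IH] m [n [Hmn Hn]].
  exists n; split => // k _; lia.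
case: (classic (exists n, m < n /\ h n <= b)) => [E|NE]; first exact: IH.
exists n; split => // k Hk.
have : ~ (h k <= b) by move=> Hk'; apply: NE; exists k.
lia.
Qed.

Lemma tail_min (h : nat -> nat) (m : nat) :
  exists n, m < n /\ forall k, m < k -> h n <= h k.
Proof. apply: (@tail_min_aux h (h m.+1)); exists m.+1; split => //. Qed.

Lemma mono_sub (h : nat -> nat) : exists psi : nat -> nat,
  (forall k, psi k < psi k.+1) /\ (forall k, h (psi k) <= h (psi k.+1)).
Proof.
pose nxt m := proj1_sig (constructive_indefinite_description _ (tail_min h m)).
have Hn m : m < nxt m /\ forall k, m < k -> h (nxt m) <= h k.
  rewrite /nxt; case: constructive_indefinite_description => /= n Hn //.
exists (fun k => iter k.+1 nxt 0); split => k.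
  by rewrite [iter k.+2 _ _]/= ; case: (Hn (iter k.+1 nxt 0)).
rewrite [iter k.+2 _ _]/= [iter k.+1 _ _]/=.
case: (Hn (iter k nxt 0)) => H1 H2; apply: H2.
case: (Hn (nxt (iter k nxt 0))) => H3 _; lia.
Qed.

Lemma dickson_aux (S : finType) (A : seq S) (g : nat -> config S) :
  exists phi : nat -> nat, (forall k, phi k < phi k.+1) /\
    forall m n, m <= n -> forall s, s \in A -> g (phi m) s <= g (phi n) s.
Proof.
elim: A => [|s A [phi [Hphi Hle]]].
  by exists id; split => // m n _ s.
have [psi [Hpsi Hh]] := mono_sub (fun k => g (phi k) s).
exists (fun k => phi (psi k)); split.
  move=> k; have H := homo_ltn (f := phi) (r := fun a b => a < b) (fun y x z => @ltn_trans y x z) Hphi.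
  exact: H.
move=> m n Hmn t; rewrite inE => /orP [/eqP -> | Ht].
  exact: (homo_leq (f := fun k => g (phi (psi k)) s) (r := leq) (@leqnn) (fun y x z => @leq_trans y x z) Hh Hmn).
apply: Hle => //.
have := homo_leq (f := psi) (r := leq) (@leqnn) (fun y x z => @leq_trans y x z).
move=> H; apply: H => //. by move=> i; apply: ltnW.
Qed.

Lemma dickson (S : finType) (g : nat -> config S) :
  exists i j, i < j /\ cle (g i) (g j).
Proof.
have [phi [Hphi Hle]] := @dickson_aux S (enum S) g.
exists (phi 0), (phi 1); split => // s; apply: Hle => //; by rewrite mem_enum.
Qed.

Section CRNfacts.
Variables (d : nat) (S : finType) (N : CRN d S).

Lemma reach_trans C D E : reachable N C D -> reachable N D E -> reachable N C E.
Proof.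
elim => [//|C1 D1 E1 Hs _ IH] H; apply: reach_step Hs (IH H).
Qed.

Lemma reach_add C D E : reachable N C D ->
  reachable N (fun s => C s + E s) (fun s => D s + E s).
Proof.
elim => [C1|C1 D1 E1 [r Hr [Hc ->]] _ IH]; first exact: reach_refl.
apply: reach_step IH; exists r => //; split.
  move=> s; have := Hc s; lia.
apply: functional_extensionality => s; have := Hc s; lia.
Qed.

Lemma reach_out_mono C D : output_oblivious N -> reachable N C D ->
  C (out N) <= D (out N).
Proof.
move=> Ho; elim => [//|C1 D1 E1 [r Hr [_ ->]] _ IH].
have := Ho r Hr; lia.
Qed.

End CRNfacts.

Local Open Scope ring_scope.

Theorem lemma9 (d : nat) (f : ('I_d -> nat) -> nat) :
  (exists a : nat -> ('I_d -> nat),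
     (forall i j : nat, (i < j)%N -> vle (a i) (a j)) /\
     (forall i j : nat, (i < j)%N ->
        exists D : 'I_d -> nat,
          (f (vadd (a i) D))%:Z - (f (a i))%:Z >
          (f (vadd (a j) D))%:Z - (f (a j))%:Z)) ->
  ~ obliviously_computable f.
Proof.
move=> [a [_ Ha]] [S [N [_ Ho Hc]]].
have Ex i : exists O, reachable N (init N (a i)) O /\ O (out N) = f (a i).
  have [O [H1 _ H2]] := Hc (a i) _ (reach_refl N _).
  by exists O.
pose g i := proj1_sig (constructive_indefinite_description _ (Ex i)).
have Hg i : reachable N (init N (a i)) (g i) /\ g i (out N) = f (a i).
  by rewrite /g; case: constructive_indefinite_description.
have [i [j [Hij Hle]]] := @dickson S g.
have [D HD] := Ha i j Hij.
pose inD (s : S) := (\sum_(k < d | inp N k == s) D k)%N.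
have Hinit x : init N (vadd x D) = (fun s => init N x s + inD s)%N.
  apply: functional_extensionality => s.
  rewrite /init /vadd /inD big_split /=; lia.
have [Ri Yi] := Hg i; have [Rj Yj] := Hg j.
have R1 := @reach_add _ _ N _ _ inD Ri; rewrite -Hinit in R1.
have [O1 [RO1 _ YO1]] := Hc _ _ R1.
have R2 := @reach_add _ _ N _ _ (fun s => g j s - g i s)%N RO1.
have E : (fun s => (g i s + inD s) + (g j s - g i s))%N = (fun s => g j s + inD s)%N.
  apply: functional_extensionality => s; have := Hle s; lia.
rewrite E in R2.
have R3 := @reach_add _ _ N _ _ inD Rj; rewrite -Hinit in R3.
have R4 := @reach_trans _ _ N _ _ _ R3 R2.
have [O2 [RO2 _ YO2]] := Hc _ _ R4.
have M := @reach_out_mono _ _ N _ _ Ho RO2.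
have Hlo := Hle (out N).
move: HD M Hlo; rewrite /= YO2 YO1 Yi Yj.
lia.
Qed.
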